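(* Let $\mu,q$ be positive integers with $q\ge 2$. There is a bijection between the set of isomorphism classes of symmetric $(\mu,q)$-nets and the set of equivalence classes of codes $C\subseteq[q]^{\mu q}$ with $|C|=\mu q^2$ and minimum Hamming distance at least $\mu q-\mu$.
   Context: $[q]=\{0,\dots,q-1\}$; the Hamming distance of two words is the number of coordinates in which they differ. A symmetric $(\mu,q)$-net is a pair $(X,\mathcal B)$ where $X$ is a set of $\mu q^2$ points and $\mathcal B$ is a collection of subsets of $X$ of size $\mu q$ (blocks) such that: (s1) $\mathcal B$ can be partitioned into $\mu q$ classes (block parallel classes), each of which is a partition of $X$; (s2) any two blocks belonging to different block parallel classes intersect in exactly $\mu$ points; (s3) $X$ can be partitioned into $\mu q$ sets of $q$ points (point parallel classes) such that any two points from different point parallel classes lie together in exactly $\mu$ blocks, while two distinct points from the same point parallel class lie together in no block. Two symmetric nets $(X,\mathcal B)$ and $(X',\mathcal B')$ are isomorphic if there is a bijection $\phi:X\to X'$ with $\{\phi(B):B\in\mathcal B\}=\mathcal B'$. Two codes $C,D\subseteq[q]^n$ are equivalent if $D$ is obtained from $C$ by permuting the $n$ coordinates and then applying, in each coordinate separately, a permutation of the symbols $[q]$. *)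

(* Defs.v *)
From mathcomp Require Import all_boot fingroup perm.
Set Implicit Arguments. Unset Strict Implicit. Unset Printing Implicit Defensive.

(* Points of a symmetric (mu,q)-net: the mu*q^2 points are taken to be 'I_(mu*q^2). *)
Definition npts (mu q : nat) := (mu * q ^ 2)%N.

Definition sym_net (mu q : nat) (B : {set {set 'I_(npts mu q)}}) : Prop :=
  (forall b, b \in B -> #|b| = (mu * q)%N) /\
  (* (s1) + (s2): a partition of B into mu*q block parallel classes *)
  (exists c : {set 'I_(npts mu q)} -> 'I_(mu * q),
     (forall i : 'I_(mu * q), partition [set b in B | c b == i] [set: 'I_(npts mu q)]) /\
     (forall b1 b2, b1 \in B -> b2 \in B -> c b1 != c b2 -> #|b1 :&: b2| = mu)) /\
  (* (s3): a partition of the points into mu*q point parallel classes of size q *)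
  (exists p : 'I_(npts mu q) -> 'I_(mu * q),
     (forall i : 'I_(mu * q), #|[set x | p x == i]| = q) /\
     (forall x y, x != y ->
        #|[set b in B | (x \in b) && (y \in b)]| = (if p x != p y then mu else 0%N))).

Definition net_iso (mu q : nat) (B B' : {set {set 'I_(npts mu q)}}) : Prop :=
  exists phi : {perm 'I_(npts mu q)}, [set (fun x => phi x) @: b | b : {set 'I_(npts mu q)} in B] = B'.

Definition word (n q : nat) := {ffun 'I_n -> 'I_q}.

Definition hamming (n q : nat) (u v : word n q) : nat := #|[set i | u i != v i]|.

Definition good_code (mu q : nat) (C : {set word (mu * q) q}) : Prop :=
  #|C| = npts mu q /\
  (forall u v, u \in C -> v \in C -> u != v -> (mu * q - mu <= hamming u v)%N).

Definition code_equiv (n q : nat) (C D : {set word n q}) : Prop :=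
  exists (sigma : {perm 'I_n}) (tau : 'I_n -> {perm 'I_q}),
    D = [set [ffun i => tau i (w (sigma i))] | w : word n q in C].

(* Main.v *)
Require Import Defs.
From mathcomp Require Import all_boot all_order all_algebra zify ring fingroup perm.
From Stdlib Require Import ClassicalEpsilon.
Set Implicit Arguments. Unset Strict Implicit. Unset Printing Implicit Defensive.

Module CSmod.
Import Order.TTheory GRing.Theory Num.Theory.

Lemma cs_id (k : nat) (s : 'I_k -> nat) :
  (\sum_a \sum_b ((s a)%:R - (s b)%:R) ^+ 2 =
   2%:R * ((k * \sum_b (s b) ^ 2)%:R - ((\sum_b s b) ^ 2)%:R) :> int)%R.
Proof.
rewrite natrM natrX !natr_sum.
under [in RHS]eq_bigr do rewrite natrX.
set S := (\sum_b (s b)%:R)%R.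
set x := fun b => ((s b)%:R : int).
have E : forall a, (\sum_b (x a - x b) ^+ 2 =
   k%:R * x a ^+ 2 + (\sum_b x b ^+ 2) - 2%:R * (x a * S) :> int)%R.
  move=> a.
  have -> : (\sum_b (x a - x b) ^+ 2 = \sum_b (x a ^+ 2 + x b ^+ 2 - 2%:R * (x a * x b)) :> int)%R.
    by apply: eq_bigr => b _; ring.
  rewrite !big_split /= sumrN big_const card_ord iter_addr_0 -mulr_sumr -mulr_sumr.
  by rewrite [in RHS]mulr_natl.
rewrite (eq_bigr _ (fun a _ => E a)).
rewrite !big_split /= sumrN -!mulr_sumr -mulr_suml big_const card_ord iter_addr_0.
rewrite -[X in (_ + X - _)%R = _]mulr_natl.
rewrite -/S. ring.
Qed.

Lemma cs_le (k : nat) (s : 'I_k -> nat) :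
  ((\sum_b s b) ^ 2 <= k * \sum_b (s b) ^ 2)%N.
Proof.
have H := cs_id s.
have H0 : (0 <= \sum_a \sum_b ((s a)%:R - (s b)%:R) ^+ 2 :> int)%R.
  by apply: sumr_ge0 => a _; apply: sumr_ge0 => b _; apply: sqr_ge0.
rewrite H pmulr_rge0 // subr_ge0 ler_nat in H0.
exact: H0.
Qed.

Lemma cs_eq (k : nat) (s : 'I_k -> nat) :
  ((\sum_b s b) ^ 2 = k * \sum_b (s b) ^ 2)%N -> forall a b, s a = s b.
Proof.
move=> Heq a b.
have H := cs_id s.
rewrite Heq subrr mulr0 in H.
have H1 := psumr_eq0P (fun a _ => sumr_ge0 _ (fun b _ => sqr_ge0 ((s a)%:R - (s b)%:R :> int))) H.
have H2 := @H1 a isT.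
have H3 := @psumr_eq0P _ _ _ _ (fun b _ => sqr_ge0 ((s a)%:R - (s b)%:R :> int)) H2 b isT.
move/eqP: H3; rewrite sqrf_eq0 subr_eq0 eqr_nat.
by move/eqP.
Qed.

End CSmod.
Import CSmod.


Lemma card_setE (T : finType) (P : pred T) : #|[set x | P x]| = \sum_x (P x : nat).
Proof. by rewrite -sum1dep_card big_mkcond; apply: eq_bigr => x _; case: (P x). Qed.

Lemma arith_le mu q m : 0 < mu -> 1 < q -> q * m ^ 2 + (mu * q - 1) * m ^ 2 <= q * (m * (mu * q + (m - 1) * mu)) -> m <= mu * q.
Proof.
move=> h1 h2 h3.
case: m h3 => // m h3.
have hn : 0 < mu * q by rewrite muln_gt0 h1 ltnW.
case E: (mu * q) h3 hn => [|k] // h3 _ /=.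
rewrite !subn1 /= in h3.
have h5 : q * (m * mu) = m * k.+1 by rewrite -E; ring.
have h4 : m.+1 * (q * m.+1 + k * m.+1) <= m.+1 * (q * k.+1 + q * (m * mu)).
  have -> : m.+1 * (q * m.+1 + k * m.+1) = q * m.+1 ^ 2 + k * m.+1 ^ 2 by ring.
  have -> : m.+1 * (q * k.+1 + q * (m * mu)) = q * (m.+1 * (k.+1 + m * mu)) by ring.
  exact: h3.
rewrite leq_pmul2l // h5 in h4.
rewrite ltnS; apply: contraLR h4; rewrite -!ltnNge => h6.
nia.
Qed.
Lemma arith_eq mu q : 0 < mu -> 1 < q -> q * ((mu * q) * (mu * q + (mu * q - 1) * mu)) = q * (mu * q) ^ 2 + (mu * q - 1) * (mu * q) ^ 2.
Proof.
move=> h1 h2.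
have hn : 0 < mu * q by rewrite muln_gt0 h1 ltnW.
move: (mu * q - 1) (subnK hn) => k.
rewrite addn1 => E.
have -> : q * (mu * q * (mu * q + k * mu)) = q * (mu * q) ^ 2 + (mu * q) * k * (mu * q) by ring.
rewrite -E; ring.
Qed.

Lemma label (T U : finType) (f : T -> U) k : #|[set f x | x in T]| = k ->
  exists g : T -> 'I_k, (forall x y, (g x == g y) = (f x == f y)) /\ (forall j, exists x, g x = j).
Proof.
move=> Hk.
set S := enum [set f x | x in T].
have Ss : size S = k by rewrite -Hk cardE.
have lt : forall x, index (f x) S < k.
  by move=> x; rewrite -Ss index_mem mem_enum; apply: imset_f.
exists (fun x => Ordinal (lt x)); split.
  move=> x y; apply/eqP/eqP => [[]|E]; last by apply: val_inj => /=; rewrite E.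
  move/(congr1 (nth (f x) S)); rewrite !nth_index //.
    by rewrite mem_enum; apply: imset_f.
  by rewrite mem_enum; apply: imset_f.
move=> j.
have jS : j < size S by rewrite Ss.
have : 0 < #|[set f x | x in T]| by rewrite Hk (leq_ltn_trans _ (ltn_ord j)).
case/card_gt0P => u /imsetP [x0 _ _].
have : nth (f x0) S j \in [set f x | x in T] by rewrite -mem_enum mem_nth.
case/imsetP => x _ Ex.
exists x; apply: val_inj => /=.
by rewrite -Ex index_uniq ?enum_uniq.
Qed.

Section Gen.
Variables mu q : nat.
Local Notation n := (mu * q).
Local Notation N := (npts mu q).
Local Notation W := (word n q).

Definition agr (u v : W) := #|[set i | u i == v i]|.
Definition fib (e : 'I_N -> W) (i : 'I_n) (a : 'I_q) : {set 'I_N} := [set x | e x i == a].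
Definition Fib (e : 'I_N -> W) := [set fib e i a | i : 'I_n, a : 'I_q].

Lemma sum_agr (e : 'I_N -> W) (A : {set 'I_N}) x :
  \sum_(y in A) agr (e x) (e y) = \sum_j #|A :&: fib e j (e x j)|.
Proof.
rewrite /agr; under eq_bigr do rewrite card_setE.
rewrite exchange_big /=; apply: eq_bigr => j _.
rewrite -sum1_card big_mkcond /= [RHS]big_mkcond /=.
apply: eq_bigr => y _; rewrite !inE; case: (y \in A) => //=.
by rewrite eq_sym.
Qed.

Lemma part_sum (e : 'I_N -> W) (A : {set 'I_N}) j :
  \sum_b #|A :&: fib e j b| = #|A|.
Proof.
rewrite -sum1_card (partition_big (fun x => e x j) predT) //=.
apply: eq_bigr => b _; rewrite -sum1_card; apply: eq_bigl => x.
by rewrite !inE.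
Qed.

Lemma sum_sq (e : 'I_N -> W) (A : {set 'I_N}) j :
  \sum_(x in A) #|A :&: fib e j (e x j)| = \sum_b #|A :&: fib e j b| ^ 2.
Proof.
rewrite (partition_big (fun x => e x j) predT) //=.
apply: eq_bigr => b _.
rewrite (eq_bigr (fun _ => #|A :&: fib e j b|)); last by move=> x /andP[_ /eqP ->].
rewrite sum_nat_cond_const.
have -> : [set x | (x \in A) && (e x j == b)] = A :&: fib e j b by apply/setP => x; rewrite !inE.
by rewrite expnS expn1.
Qed.

End Gen.


Section Plotkin.
Variables mu q : nat.
Hypotheses (hmu : 0 < mu) (hq : 1 < q).
Local Notation n := (mu * q).
Local Notation N := (npts mu q).
Local Notation W := (word n q).
Variable e : 'I_N -> W.
Hypothesis einj : injective e.
Hypothesis hagr : forall x y, x != y -> agr (e x) (e y) <= mu.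

Lemma agr_self x : agr (e x) (e x) = n.
Proof.
rewrite /agr; have -> : [set i | e x i == e x i] = setT by apply/setP => i; rewrite !inE eqxx.
by rewrite cardsT card_ord.
Qed.

Lemma U_leqif (A : {set 'I_N}) x : x \in A ->
  \sum_(y in A) agr (e x) (e y) <= n + (#|A| - 1) * mu
     ?= iff [forall (y | (y \in A) && (y != x)), agr (e x) (e y) == mu].
Proof.
move=> xA.
rewrite (bigD1 x) //= agr_self.
have cA : #|[pred y in A | y != x]| = #|A| - 1.
  by rewrite (cardD1x xA); rewrite addKn.
have -> : (#|A| - 1) * mu = \sum_(y in A | y != x) mu.
  by rewrite -cA -sum_nat_const; apply: eq_bigl => y; rewrite !inE.
have H0 : forall y, (y \in A) && (y != x) -> agr (e x) (e y) <= mu ?= iff (agr (e x) (e y) == mu).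
  move=> y /andP[_ yx]; split; first by apply: hagr; rewrite eq_sym.
  by rewrite eqn_leq hagr 1?eq_sym.
have H := leqif_add (leqif_eq (leqnn n)) (leqif_sum H0).
by rewrite eqxx /= in H.
Qed.


Section Block.
Variables (i : 'I_n) (a : 'I_q).
Local Notation A := (fib e i a).
Local Notation m := #|fib e i a|.
Local Notation X := (\sum_(x in A) \sum_(y in A) agr (e x) (e y)).
Local Notation Q j := (\sum_b #|A :&: fib e j b| ^ 2).

Lemma X_eq : X = \sum_j Q j.
Proof.
under eq_bigr do rewrite sum_agr.
rewrite exchange_big /=; apply: eq_bigr => j _; exact: sum_sq.
Qed.

Lemma X_le : X <= m * (n + (m - 1) * mu).
Proof.
rewrite -sum_nat_const; apply: leq_sum => x xA.
by rewrite (U_leqif xA).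
Qed.

Lemma X_eq_agr : X = m * (n + (m - 1) * mu) ->
  forall x y, x \in A -> y \in A -> x != y -> agr (e x) (e y) = mu.
Proof.
move=> HX x y xA yA xy.
have H := leqif_sum (fun x (xA : x \in A) => U_leqif xA).
rewrite sum_nat_const in H.
move: (H) => [_ /esym]; rewrite HX eqxx => /forall_inP/(_ x xA)/forall_inP/(_ y).
by rewrite yA eq_sym xy => /(_ isT)/eqP.
Qed.

Lemma Qi : Q i = m ^ 2.
Proof.
rewrite (bigD1 a) //= big1 ?addn0.
  by congr (_ ^ 2); rewrite setIid.
move=> b ba; apply/eqP; rewrite expn_eq0 cards_eq0 andbT; apply/eqP/setP => x.
rewrite !inE; apply/negbTE; apply/negP => /andP[/eqP -> /eqP E].
by rewrite E eqxx in ba.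
Qed.

Lemma Qj j : m ^ 2 <= q * Q j.
Proof.
have H := cs_le (fun b => #|A :&: fib e j b|).
by rewrite part_sum in H.
Qed.

Lemma qX : q * X = q * m ^ 2 + \sum_(j | j != i) q * Q j.
Proof.
by rewrite X_eq (bigD1 i) //= Qi mulnDr big_distrr.
Qed.

Lemma qX_ge : q * m ^ 2 + (n - 1) * m ^ 2 <= q * X.
Proof.
rewrite qX leq_add2l.
have -> : (n - 1) * m ^ 2 = \sum_(j | j != i) m ^ 2.
  rewrite sum_nat_const; congr (_ * _).
  have := cardC1 i; rewrite card_ord => ->.
  by rewrite subn1.
by apply: leq_sum => j _; apply: Qj.
Qed.

Lemma size_le : m <= n.
Proof.
apply: arith_le hmu hq _.
apply: leq_trans (qX_ge) _.
by rewrite leq_mul2l X_le orbT.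
Qed.

Hypothesis Hm : m = n.

Lemma X_full : X = m * (n + (m - 1) * mu).
Proof.
apply/eqP; rewrite eqn_leq X_le /=.
rewrite -(@leq_pmul2l q) ?(ltnW hq) //.
have := qX_ge; rewrite Hm arith_eq //.
Qed.

Lemma agr_in x y : x \in A -> y \in A -> x != y -> agr (e x) (e y) = mu.
Proof. by move=> xA yA xy; apply: (X_eq_agr X_full xA yA xy). Qed.

Lemma Qj_eq j : j != i -> q * Q j = m ^ 2.
Proof.
move=> ji.
have H : forall j, j != i -> m ^ 2 <= q * Q j ?= iff (m ^ 2 == q * Q j).
  by move=> j' _; apply: leqif_eq; apply: Qj.
have E1 : q * X = q * m ^ 2 + (n - 1) * m ^ 2.
  by rewrite X_full Hm arith_eq.
have E2 : \sum_(j | j != i) q * Q j = \sum_(j | j != i) m ^ 2.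
  have := qX; rewrite E1 => /addnI <-.
  rewrite sum_nat_const; congr (_ * _).
  have := cardC1 i; rewrite card_ord => ->.
  by rewrite subn1.
have [_] := leqif_sum H.
rewrite E2 eqxx => /esym/forall_inP/(_ j ji)/eqP.
by [].
Qed.

Lemma int_eq j b : j != i -> #|A :&: fib e j b| = mu.
Proof.
move=> ji.
have H := Qj_eq ji.
have Hs := part_sum e A j.
have Hc := cs_eq (s := fun b => #|A :&: fib e j b|).
rewrite Hs H in Hc.
have Hall := Hc erefl.
have : \sum_(b' < q) #|A :&: fib e j b'| = q * #|A :&: fib e j b|.
  by rewrite (eq_bigr (fun _ => #|A :&: fib e j b|)) ?sum_nat_const ?card_ord // => b' _; apply: Hall.
rewrite Hs Hm mulnC => /eqP; rewrite eqn_pmul2l ?(ltnW hq) // => /eqP.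
by move=> <-.
Qed.

End Block.

Lemma npts_eq : N = q * n.
Proof. by rewrite /npts; ring. Qed.

Lemma fib_size i a : #|fib e i a| = n.
Proof.
have H : forall b : 'I_q, true -> #|fib e i b| <= n ?= iff (#|fib e i b| == n).
  by move=> b _; apply: leqif_eq; apply: size_le.
have [_] := leqif_sum H.
have -> : \sum_(b < q) #|fib e i b| = \sum_(b < q) n.
  rewrite sum_nat_const card_ord -npts_eq.
  have P := part_sum e setT i; rewrite cardsT card_ord in P.
  by apply: etrans P; apply: eq_bigr => b _; rewrite setTI.
by rewrite eqxx => /esym/forall_inP/(_ a isT)/eqP.
Qed.

Lemma agr_mu x y i : x != y -> e x i == e y i -> agr (e x) (e y) = mu.
Proof.
move=> xy Hi.
apply: (agr_in (i := i) (a := e x i)) => //; first exact: fib_size.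
  by rewrite inE.
by rewrite inE eq_sym.
Qed.

Lemma fib_int i j a b : i != j -> #|fib e i a :&: fib e j b| = mu.
Proof. by move=> ij; apply: int_eq; [exact: fib_size | rewrite eq_sym]. Qed.

End Plotkin.


Section Nbr.
Variables mu q : nat.
Hypotheses (hmu : 0 < mu) (hq : 1 < q).
Local Notation n := (mu * q).
Local Notation N := (npts mu q).
Local Notation W := (word n q).
Variable e : 'I_N -> W.
Hypothesis einj : injective e.
Hypothesis hagr : forall x y, x != y -> agr (e x) (e y) <= mu.

Let Fsize := fib_size hmu hq hagr.
Let Fint := fib_int hmu hq hagr.
Let Amu := agr_mu hmu hq hagr.

Let n_gt0 : 0 < n. Proof. by rewrite muln_gt0 hmu ltnW. Qed.
Let i0 : 'I_n := Ordinal n_gt0.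

Definition Rn x y := [forall i, e x i != e y i].

Lemma agr0 x y : (agr (e x) (e y) == 0) = Rn x y.
Proof.
rewrite /agr cards_eq0; apply/eqP/forallP => [H i|H].
  by apply/negP => Hi; move/setP/(_ i): H; rewrite !inE Hi.
by apply/setP => i; rewrite !inE; apply/negbTE/H.
Qed.

Lemma agr_cases x y : x != y -> agr (e x) (e y) = if Rn x y then 0 else mu.
Proof.
move=> xy; case: ifP => [/idP|]; first by rewrite -agr0 => /eqP.
move/negbT/forallPn => [i]; rewrite negbK => Hi.
exact: (Amu xy Hi).
Qed.

Lemma Rn_sym x y : Rn x y = Rn y x.
Proof. by apply/forallP/forallP => H i; rewrite eq_sym. Qed.

Lemma Rn_irr x : ~~ Rn x x.
Proof. by apply/forallPn; exists i0; rewrite eqxx. Qed.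

Lemma one_nb x i a : e x i != a -> #|[set y in fib e i a | Rn x y]| = 1.
Proof.
move=> xa.
set A := fib e i a.
have H1 : \sum_(y in A) agr (e x) (e y) = (n - 1) * mu.
  rewrite sum_agr (bigD1 i) //=.
  have -> : #|A :&: fib e i (e x i)| = 0.
    apply/eqP; rewrite cards_eq0; apply/eqP/setP => y; rewrite !inE.
    by apply/negbTE; apply/negP => /andP[/eqP -> /eqP E]; rewrite E eqxx in xa.
  rewrite add0n (eq_bigr (fun _ => mu)); last first.
    by move=> j ji; apply: Fint => //; rewrite eq_sym.
  rewrite sum_nat_const; congr (_ * _).
  by have := cardC1 i; rewrite card_ord subn1 => <-; apply: eq_card => j; rewrite !inE.
have H2 : \sum_(y in A) agr (e x) (e y) = #|A :\: [set y | Rn x y]| * mu.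
  rewrite -sum_nat_const big_mkcond [RHS]big_mkcond /=.
  apply: eq_bigr => y _; rewrite !inE.
  case yA: (e y i == a) => /=; last by rewrite andbF.
  have xy : x != y.
    by apply/eqP => E; move: yA; rewrite -E; apply/negP.
  by rewrite andbT agr_cases //; case: (Rn x y).
rewrite H1 in H2.
move/eqP: H2; rewrite eqn_pmul2r // => /eqP H2.
have H3 := cardsID [set y | Rn x y] A.
rewrite -H2 Fsize in H3.
have -> : [set y in A | Rn x y] = A :&: [set y | Rn x y] by apply/setP => y; rewrite !inE.
move: H3 (subnK n_gt0); set X := #|_ :&: _|; set Y := mu * q; move=> H3 H4; lia.
Qed.

Lemma nb_tri x y z : Rn x y -> Rn x z -> y != z -> Rn y z.
Proof.
move=> Hxy Hxz yz; apply/forallP => i; apply/negP => /eqP Eyz.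
have xa : e x i != e y i by move/forallP: Hxy.
have H := one_nb xa.
have /card_le1_eqP H2 : #|[set y0 in fib e i (e y i) | Rn x y0]| <= 1 by rewrite H.
have yin : y \in [set y0 in fib e i (e y i) | Rn x y0] by rewrite !inE eqxx.
have zin : z \in [set y0 in fib e i (e y i) | Rn x y0] by rewrite !inE Eyz eqxx.
by move: (H2 y z yin zin) => E; rewrite E eqxx in yz.
Qed.

Definition Rel x y := (x == y) || Rn x y.
Definition cls x := [set y | Rel x y].

Lemma Rel_sym x y : Rel x y = Rel y x.
Proof. by rewrite /Rel eq_sym Rn_sym. Qed.

Lemma Rel_trans x y z : Rel x y -> Rel y z -> Rel x z.
Proof.
rewrite /Rel => /orP[/eqP -> //|Hxy] /orP[/eqP <-|Hyz]; first by rewrite Hxy orbT.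
case: (eqVneq x z) => [->//|xz] /=.
apply: (nb_tri (x := y)) => //.
by rewrite Rn_sym.
Qed.

Lemma cls_eq x y : y \in cls x -> cls y = cls x.
Proof.
rewrite inE => Hxy; apply/setP => z; rewrite !inE.
apply/idP/idP => H; first exact: Rel_trans Hxy H.
by apply: Rel_trans H; rewrite Rel_sym.
Qed.

Lemma cls_card x : #|cls x| = q.
Proof.
have Hn : #|[set y | Rn x y]| = q - 1.
  rewrite -(part_sum e [set y | Rn x y] i0) (bigD1 (e x i0)) //=.
  have -> : #|[set y | Rn x y] :&: fib e i0 (e x i0)| = 0.
    apply/eqP; rewrite cards_eq0; apply/eqP/setP => y; rewrite !inE.
    apply/negbTE/negP => /andP[/forallP/(_ i0) H /eqP E].
    by rewrite E eqxx in H.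
  rewrite add0n (eq_bigr (fun _ => 1)); last first.
    move=> b bx; rewrite -(@one_nb x i0 b) 1?eq_sym //.
    by apply: eq_card => y; rewrite !inE andbC.
  by rewrite sum_nat_const muln1 cardC1 card_ord subn1.
have -> : cls x = x |: [set y | Rn x y] by apply/setP => y; rewrite !inE eq_sym.
rewrite cardsU1 Hn inE Rn_irr /=.
by rewrite add1n subn1 prednK // ltnW.
Qed.

Definition clsP := [set cls x | x : 'I_N].

Lemma clsP_partition : partition clsP setT.
Proof.
apply/and3P; split.
- apply/eqP/setP => x; rewrite inE; apply/bigcupP; exists (cls x).
    by apply: imset_f.
  by rewrite inE /Rel eqxx.
- apply/trivIsetP => A B /imsetP[x _ ->] /imsetP[y _ ->] Hxy.
  apply/pred0P => z /=; apply/negP => /andP[zx zy].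
  by move: Hxy; rewrite -(cls_eq zx) -(cls_eq zy) eqxx.
- apply/imsetP => [[x _ E]].
  have : x \in cls x by rewrite inE /Rel eqxx.
  by rewrite -E inE.
Qed.

Lemma clsP_card : #|clsP| = n.
Proof.
have H := card_partition clsP_partition.
rewrite cardsT card_ord (eq_bigr (fun _ => q)) in H; last first.
  by move=> A /imsetP[x _ ->]; apply: cls_card.
rewrite sum_nat_const in H.
have := etrans (esym (npts_eq mu q)) H.
by rewrite [RHS]mulnC => /eqP; rewrite eqn_pmul2l ?(ltnW hq) // => /eqP.
Qed.

End Nbr.


Section CodeNet.
Variables mu q : nat.
Hypotheses (hmu : 0 < mu) (hq : 1 < q).
Local Notation n := (mu * q).
Local Notation N := (npts mu q).
Local Notation W := (word n q).
Variable e : 'I_N -> W.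
Hypothesis hagr : forall x y, x != y -> agr (e x) (e y) <= mu.

Let Fsize := fib_size hmu hq hagr.
Let Fint := fib_int hmu hq hagr.
Let n_gt0 : 0 < n. Proof. by rewrite muln_gt0 hmu ltnW. Qed.
Let i0 : 'I_n := Ordinal n_gt0.

Lemma fib_nonempty i a : exists x, x \in fib e i a.
Proof. by apply/set0Pn; rewrite -card_gt0 Fsize. Qed.

Lemma fib_inj i j a b : fib e i a = fib e j b -> i = j /\ a = b.
Proof.
move=> E.
have ij : i = j.
  apply/eqP; apply: contraT => ij.
  have := Fint a b ij; rewrite E setIid Fsize => /eqP.
  rewrite -{2}[mu]muln1 eqn_pmul2l // => /eqP q1.
  by move: hq; rewrite q1.
split => //; subst j.
have [x xa] := fib_nonempty i a.
have xb := xa; rewrite E in xb.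
by move: xa xb; rewrite !inE => /eqP <- /eqP.
Qed.

Lemma blocks_count x y :
  #|[set b in Fib e | (x \in b) && (y \in b)]| = agr (e x) (e y).
Proof.
rewrite /agr -(card_in_imset (f := fun i => fib e i (e x i))); last first.
  by move=> i j _ _ /fib_inj [].
apply: eq_card => b; rewrite [in LHS]inE.
apply/andP/imsetP => [[/imset2P[i a _ _ ->] /andP[xb yb]]|[i]].
  exists i.
    by move: xb yb; rewrite !inE => /eqP -> /eqP ->.
  by move: xb; rewrite !inE => /eqP ->.
rewrite inE => /eqP Ei ->; split; first by apply/imset2P; exists i (e x i).
by rewrite !inE Ei !eqxx.
Qed.

Definition cmap (b : {set 'I_N}) : 'I_n :=
  if [pick i | [exists a, b == fib e i a]] is Some i then i else i0.

Lemma cmap_fib i a : cmap (fib e i a) = i.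
Proof.
rewrite /cmap; case: pickP => [j /existsP[b /eqP /fib_inj [-> _]] //|H].
by move: (H i) => /existsP; case; exists a.
Qed.

Lemma code_net : sym_net (Fib e).
Proof.
split; first by move=> b /imset2P[i a _ _ ->]; apply: Fsize.
split.
  exists cmap; split.
    move=> i.
    have -> : [set b in Fib e | cmap b == i] = [set fib e i a | a : 'I_q].
      apply/setP => b; rewrite !inE; apply/andP/imsetP.
        by move=> [/imset2P[j a _ _ ->]]; rewrite cmap_fib => /eqP ->; exists a.
      move=> [a _ ->]; rewrite cmap_fib eqxx; split => //.
      by apply/imset2P; exists i a.
    apply/and3P; split.
    - apply/eqP/setP => x; rewrite inE; apply/bigcupP; exists (fib e i (e x i)).
        exact: imset_f.
      by rewrite inE.
    - apply/trivIsetP => A B /imsetP[a _ ->] /imsetP[b _ ->] ab.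
      apply/pred0P => z /=; rewrite !inE; apply/negP => /andP[/eqP za /eqP zb].
      by move: ab; rewrite -za -zb eqxx.
    - apply/imsetP => [[a _ E]].
      have [x] := fib_nonempty i a.
      by rewrite -E inE.
  move=> b1 b2 /imset2P[i a _ _ ->] /imset2P[j b _ _ ->].
  by rewrite !cmap_fib => ij; apply: Fint.
have Hk : #|[set cls e x | x in 'I_N]| = n by apply: clsP_card.
have [g [Hg Hsurj]] := label Hk.
exists g; split.
  move=> i; have [x0 <-] := Hsurj i.
  apply: etrans (cls_card hmu hq hagr x0); apply: eq_card => x.
  rewrite [in LHS]inE Hg; apply/eqP/idP => [E|H].
    by rewrite -E inE /Rel eqxx.
  exact: cls_eq.
move=> x y xy.
rewrite blocks_count (agr_cases hmu hq hagr xy) Hg.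
have -> : (cls e x == cls e y) = Rn e x y.
  apply/eqP/idP => [E|H].
    have : y \in cls e x by rewrite E inE /Rel eqxx.
    by rewrite inE /Rel (negbTE xy).
  by rewrite (@cls_eq _ _ hmu hq e hagr x y) // inE /Rel H orbT.
by case: (Rn e x y).
Qed.

End CodeNet.


Section NetCode.
Variables mu q : nat.
Hypotheses (hmu : 0 < mu) (hq : 1 < q).
Local Notation n := (mu * q).
Local Notation N := (npts mu q).
Local Notation W := (word n q).
Variable B : {set {set 'I_N}}.
Hypothesis HB : sym_net B.

Lemma net_code : exists w : 'I_N -> W, Fib w = B /\
  (forall x y, x != y -> agr (w x) (w y) <= mu).
Proof.
case: HB => [Hsz [[c [Hpart Hcross]] [p [Hp Hpair]]]].
pose Bi i := [set b in B | c b == i].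
have Htriv i : trivIset (Bi i) by case/and3P: (Hpart i).
have Hcov i x : x \in cover (Bi i) by case/and3P: (Hpart i) => /eqP -> _ _.
have Hne i : set0 \notin Bi i by case/and3P: (Hpart i).
have Hpm i x : pblock (Bi i) x \in Bi i by apply: pblock_mem.
have Hcard i : #|[set pblock (Bi i) x | x in 'I_N]| = q.
  have -> : [set pblock (Bi i) x | x in 'I_N] = Bi i.
    apply/setP => b; apply/imsetP/idP => [[x _ ->] //|bB].
    have /set0Pn [x xb] : b != set0 by apply: contraNneq (Hne i) => <-.
    by exists x => //; rewrite (def_pblock (Htriv i) bB xb).
  have H := card_partition (Hpart i).
  rewrite cardsT card_ord (eq_bigr (fun _ => n)) in H; last first.
    by move=> b; rewrite inE => /andP[bB _]; apply: Hsz.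
  rewrite sum_nat_const in H.
  have := etrans (esym (npts_eq mu q)) H.
  have n_gt0 : 0 < n by rewrite muln_gt0 hmu ltnW.
  by move/eqP; rewrite eqn_pmul2r // => /eqP <-.
have G i : {g : 'I_N -> 'I_q | (forall x y, (g x == g y) = (pblock (Bi i) x == pblock (Bi i) y)) /\ (forall j, exists x, g x = j)}.
  by apply: constructive_indefinite_description; apply: label (Hcard i).
pose w x : W := [ffun i => sval (G i) x].
have Hw i x y : (w x i == w y i) = (y \in pblock (Bi i) x).
  by rewrite !ffunE (proj1 (svalP (G i))) eq_pblock.
have Hfib i a : exists x0, fib w i a = pblock (Bi i) x0.
  have [x0 Ex0] := proj2 (svalP (G i)) a.
  exists x0; apply/setP => x; rewrite inE.
  have -> : a = w x0 i by rewrite ffunE Ex0.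
  by rewrite eq_sym Hw.
exists w; split.
  apply/setP => b; apply/imset2P/idP.
    move=> [i a _ _ ->]; have [x0 ->] := Hfib i a.
    by have := Hpm i x0; rewrite inE => /andP[].
  move=> bB.
  have bBi : b \in Bi (c b) by rewrite inE bB eqxx.
  have /set0Pn [x0 xb] : b != set0 by apply: contraNneq (Hne (c b)) => <-.
  exists (c b) (w x0 (c b)) => //.
  apply/setP => x; rewrite inE eq_sym Hw (def_pblock (Htriv _) bBi xb).
  by [].
move=> x y xy.
suff -> : agr (w x) (w y) = #|[set b in B | (x \in b) && (y \in b)]|.
  by rewrite Hpair //; case: ifP.
rewrite /agr -(card_in_imset (f := fun i => pblock (Bi i) x)); last first.
  have Hc k z : c (pblock (Bi k) z) = k by have := Hpm k z; rewrite inE => /andP[_ /eqP].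
  by move=> i j _ _ /= E; rewrite -(Hc i x) -(Hc j x) E.
apply: eq_card => b; rewrite [in RHS]inE.
apply/imsetP/andP => [[i]|[bB /andP[xb yb]]].
  rewrite inE Hw => yi ->; split; first by have := Hpm i x; rewrite inE => /andP[].
  by rewrite yi andbT mem_pblock Hcov.
have bBi : b \in Bi (c b) by rewrite inE bB eqxx.
exists (c b); last by rewrite (def_pblock (Htriv _) bBi xb).
by rewrite inE Hw (def_pblock (Htriv _) bBi xb).
Qed.

End NetCode.


Section Rigid.
Variables mu q : nat.
Hypotheses (hmu : 0 < mu) (hq : 1 < q).
Local Notation n := (mu * q).
Local Notation N := (npts mu q).
Local Notation W := (word n q).

Definition Tmap (s : {perm 'I_n}) (t : 'I_n -> {perm 'I_q}) (u : W) : W :=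
  [ffun i => t i (u (s i))].

Lemma Tmap_inj s t : injective (Tmap s t).
Proof.
move=> u v /ffunP E; apply/ffunP => j.
have := E (s^-1%g j); rewrite !ffunE permKV => /perm_inj.
by [].
Qed.

Variables e1 e2 : 'I_N -> W.
Hypothesis hagr1 : forall x y, x != y -> agr (e1 x) (e1 y) <= mu.
Hypothesis hagr2 : forall x y, x != y -> agr (e2 x) (e2 y) <= mu.
Hypothesis HF : Fib e1 = Fib e2.

Lemma rigid : exists s t, forall x, e2 x = Tmap s t (e1 x).
Proof.
have a0 : 'I_q by exists 0; rewrite ltnW.
have H0 i a : exists jb : 'I_n * 'I_q, fib e2 i a = fib e1 jb.1 jb.2.
  have : fib e2 i a \in Fib e1 by rewrite HF; apply/imset2P; exists i a.
  by case/imset2P => j b _ _ E; exists (j, b).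
have Hf i a := constructive_indefinite_description _ (H0 i a).
pose s i a := (sval (Hf i a)).1.
pose t i a := (sval (Hf i a)).2.
have Est i a : fib e2 i a = fib e1 (s i a) (t i a) := svalP (Hf i a).
have Hs i a b : s i a = s i b.
  case: (eqVneq a b) => [-> //|ab].
  apply/eqP; apply: contraT => sab.
  have := fib_int hmu hq hagr1 (t i a) (t i b) sab.
  rewrite -!Est.
  have -> : fib e2 i a :&: fib e2 i b = set0.
    apply/setP => x; rewrite !inE; apply/negbTE/negP => /andP[/eqP xa /eqP xb].
    by rewrite -xa -xb eqxx in ab.
  by rewrite cards0 => mu0; move: hmu; rewrite -mu0.
pose s0 i := s i a0.
have s0_inj : injective s0.
  move=> i1 i2 E; apply/eqP; apply: contraT => i12.
  have := fib_int hmu hq hagr2 a0 a0 i12.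
  rewrite !Est -/(s0 i1) -/(s0 i2) E.
  case: (eqVneq (t i1 a0) (t i2 a0)) => [Et|Ht].
    move=> _; have : fib e2 i1 a0 = fib e2 i2 a0 by rewrite !Est -/(s0 i1) -/(s0 i2) E Et.
    by move/(fib_inj hmu hq hagr2) => [E12 _]; rewrite E12 eqxx in i12.
  have -> : fib e1 (s0 i2) (t i1 a0) :&: fib e1 (s0 i2) (t i2 a0) = set0.
    apply/setP => x; rewrite !inE; apply/negbTE/negP => /andP[/eqP xa /eqP xb].
    by rewrite -xa -xb eqxx in Ht.
  by rewrite cards0 => mu0; move: hmu; rewrite -mu0.
have t_inj i : injective (t i).
  move=> a b E.
  have : fib e2 i a = fib e2 i b by rewrite !Est E (Hs i a b).
  by case/(fib_inj hmu hq hagr2).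
pose sg := perm s0_inj.
pose tg i := perm (t_inj i).
exists sg, (fun i => (tg i)^-1%g) => x; apply/ffunP => i; rewrite ffunE.
have : x \in fib e2 i (e2 x i) by rewrite inE.
rewrite Est inE => /eqP E.
apply: (@perm_inj _ (tg i)); rewrite permKV permE -E permE /s0.
by rewrite (Hs i a0 (e2 x i)).
Qed.

End Rigid.


Section Main.
Variables mu q : nat.
Local Notation n := (mu * q).
Local Notation N := (npts mu q).
Local Notation W := (word n q).

Definition enc (w0 : W) (C : {set W}) (x : 'I_N) : W := nth w0 (enum C) x.

Lemma enc_inj w0 (C : {set W}) : #|C| = N -> injective (enc w0 C).
Proof.
move=> HC x y /eqP; rewrite /enc nth_uniq ?enum_uniq -?cardE ?HC //.
by move/eqP/val_inj.
Qed.

Lemma enc_in w0 (C : {set W}) x : #|C| = N -> enc w0 C x \in C.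
Proof. by move=> HC; rewrite -mem_enum /enc mem_nth // -cardE HC. Qed.

Lemma enc_onto w0 (C : {set W}) u : #|C| = N -> u \in C -> exists x, enc w0 C x = u.
Proof.
move=> HC uC.
have lt : index u (enum C) < N by rewrite -HC cardE index_mem mem_enum.
by exists (Ordinal lt); rewrite /enc /= nth_index // mem_enum.
Qed.

Lemma enc_img w0 (C : {set W}) : #|C| = N -> [set enc w0 C x | x : 'I_N] = C.
Proof.
move=> HC; apply/setP => u; apply/imsetP/idP => [[x _ ->]|uC]; first exact: enc_in.
by have [x Ex] := enc_onto w0 HC uC; exists x.
Qed.

Lemma mk_perm (f g : 'I_N -> W) : injective g ->
  (forall x, exists y, f y = g x) -> exists phi : {perm 'I_N}, forall x, f (phi x) = g x.
Proof.
move=> ginj H.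
have Hf x := constructive_indefinite_description _ (H x).
pose h x := sval (Hf x).
have Eh x : f (h x) = g x := svalP (Hf x).
have hinj : injective h by move=> x y E; apply: ginj; rewrite -!Eh E.
by exists (perm hinj) => x; rewrite permE.
Qed.

Lemma transport (e e' : 'I_N -> W) (phi : {perm 'I_N}) s t :
  (forall x, e' (phi x) = Tmap s t (e x)) ->
  [set (fun x => phi x) @: b | b : {set 'I_N} in Fib e] = Fib e'.
Proof.
move=> H.
have key i a : phi @: fib e i a = fib e' (s^-1%g i) (t (s^-1%g i) a).
  apply/setP => y; rewrite -[y](permKV phi) mem_imset; last exact: perm_inj.
  by rewrite !inE H ffunE permKV (inj_eq perm_inj).
apply/setP => B; apply/imsetP/imset2P.
  by move=> [b /imset2P[i a _ _ ->] ->]; exists (s^-1%g i) (t (s^-1%g i) a).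
move=> [j b _ _ ->]; exists (fib e (s j) ((t j)^-1%g b)); first by apply/imset2P; exists (s j) ((t j)^-1%g b).
by rewrite key permK permKV.
Qed.

Lemma net_iso_sym (B B' : {set {set 'I_N}}) : net_iso B B' -> net_iso B' B.
Proof.
case=> phi <-; exists phi^-1%g.
rewrite -imset_comp -[RHS]imset_id; apply: eq_imset => b /=.
by rewrite -imset_comp -[RHS]imset_id; apply: eq_imset => x /=; rewrite permK.
Qed.

Lemma net_iso_trans (B1 B2 B3 : {set {set 'I_N}}) : net_iso B1 B2 -> net_iso B2 B3 -> net_iso B1 B3.
Proof.
case=> phi1 <- [phi2 <-]; exists (phi1 * phi2)%g.
rewrite -imset_comp; apply: eq_imset => b /=.
by rewrite -imset_comp; apply: eq_imset => x /=; rewrite permM.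
Qed.

End Main.


Section Final.
Variables mu q : nat.
Hypotheses (hmu : 0 < mu) (hq : 1 < q).
Local Notation n := (mu * q).
Local Notation N := (npts mu q).
Local Notation W := (word n q).
Variable w0 : W.

Definition K (C : {set W}) := Fib (enc w0 C).

Lemma ham_agr (u v : W) : hamming u v + agr u v = n.
Proof.
rewrite /hamming /agr addnC.
have -> : [set i | u i != v i] = ~: [set i | u i == v i] by apply/setP => i; rewrite !inE.
by rewrite cardsC card_ord.
Qed.

Lemma good_agr (C : {set W}) : good_code C ->
  forall u v, u \in C -> v \in C -> u != v -> agr u v <= mu.
Proof.
case=> _ H u v uC vC uv.
have := H u v uC vC uv; have := ham_agr u v.
have : mu <= n by rewrite leq_pmulr // ltnW.
lia.
Qed.

Lemma good_hagr (C : {set W}) : good_code C ->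
  forall x y, x != y -> agr (enc w0 C x) (enc w0 C y) <= mu.
Proof.
move=> HC x y xy; case: (HC) => Hc _.
apply: (good_agr HC); rewrite ?enc_in //.
by rewrite (inj_eq (@enc_inj _ _ w0 _ Hc)).
Qed.

Lemma K_net (C : {set W}) : good_code C -> sym_net (K C).
Proof. by move=> HC; exact: (code_net hmu hq (@good_hagr C HC)). Qed.

Lemma Ynet (B : {set {set 'I_N}}) : sym_net B -> exists C, good_code C /\ net_iso B (K C).
Proof.
move=> HB.
have [w [Fw Hw]] := net_code hmu hq HB.
have winj : injective w.
  move=> x y E; apply/eqP; apply: contraT => xy.
  have := Hw x y xy; rewrite E.
  have := ham_agr (w y) (w y).
  have -> : hamming (w y) (w y) = 0.
    by apply/eqP; rewrite cards_eq0; apply/eqP/setP => i; rewrite !inE eqxx.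
  rewrite add0n => ->; rewrite leqNgt.
  by rewrite -{1}[mu]muln1 ltn_pmul2l // hq.
pose C := [set w x | x : 'I_N].
have HC : #|C| = N by rewrite card_imset // cardT size_enum_ord.
have gC : good_code C.
  split => // u v /imsetP[x _ ->] /imsetP[y _ ->] uv.
  have xy : x != y by apply: contraNneq uv => ->.
  have := Hw x y xy; have := ham_agr (w x) (w y).
  have : mu <= n by rewrite leq_pmulr // ltnW.
  lia.
exists C; split => //.
have [phi Hphi] : exists phi : {perm 'I_N}, forall x, enc w0 C (phi x) = w x.
  apply: mk_perm => // x; apply: enc_onto => //; exact: imset_f.
exists phi; rewrite -Fw; apply: (transport (s := 1%g) (t := fun _ => 1%g)) => x.
by rewrite Hphi; apply/ffunP => i; rewrite ffunE !perm1.
Qed.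

Lemma Xto (C C' : {set W}) : good_code C -> good_code C' -> code_equiv C C' -> net_iso (K C) (K C').
Proof.
move=> [HC _] [HC' _] [s [t E]].
have E' : C' = [set Tmap s t w | w in C] by [].
rewrite E' in HC' *.
have [phi Hphi] : exists phi : {perm 'I_N}, forall x, enc w0 [set Tmap s t w | w in C] (phi x) = Tmap s t (enc w0 C x).
  apply: mk_perm.
    by move=> x y /Tmap_inj /(@enc_inj _ _ w0 _ HC).
  move=> x; apply: (@enc_onto _ _ w0 _ _ HC'); apply: imset_f; exact: enc_in.
by exists phi; apply: transport Hphi.
Qed.

Lemma Xfrom (C C' : {set W}) : good_code C -> good_code C' -> net_iso (K C) (K C') -> code_equiv C C'.
Proof.
move=> gC gC' [phi Hphi].
have [HC _] := gC; have [HC' _] := gC'.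
pose e2 x := enc w0 C' (phi x).
have H2 := transport (e := e2) (e' := enc w0 C') (phi := phi) (s := 1%g) (t := fun _ => 1%g).
have F2 : Fib e2 = K C.
  have Hinj : injective (fun b : {set 'I_N} => [set phi x | x in b]).
    by apply: imset_inj; apply: perm_inj.
  apply: (imset_inj Hinj).
  rewrite Hphi H2 // => x; by apply/ffunP => i; rewrite ffunE !perm1.
have hagr2 : forall x y, x != y -> agr (e2 x) (e2 y) <= mu.
  by move=> x y xy; apply: good_hagr => //; rewrite (inj_eq perm_inj).
have [s [t Hst]] := rigid hmu hq (good_hagr gC) hagr2 (esym F2).
exists s, t.
rewrite -(@enc_img _ _ w0 _ HC') -(@enc_img _ _ w0 _ HC) -imset_comp.
apply/setP => u; apply/imsetP/imsetP => [[y _ ->]|[x _ ->]].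
  exists (phi^-1%g y) => //=.
  by have := Hst (phi^-1%g y); rewrite /e2 permKV.
by exists (phi x) => //=; have := Hst x; rewrite /e2 => ->.
Qed.

End Final.


Theorem theorem5p13 (mu q : nat) (hmu : (0 < mu)%N) (hq : (2 <= q)%N) :
  exists F : {set {set 'I_(npts mu q)}} -> {set word (mu * q) q},
    (forall B, @sym_net mu q B -> @good_code mu q (F B)) /\
    (forall B B', @sym_net mu q B -> @sym_net mu q B' ->
       (net_iso B B' <-> code_equiv (F B) (F B'))) /\
    (forall C, @good_code mu q C -> exists B, @sym_net mu q B /\ code_equiv (F B) C).
Proof.
have a0 : 'I_q by exists 0; apply: ltnW.
pose w0 : word (mu * q) q := [ffun _ => a0].
pose F (B : {set {set 'I_(npts mu q)}}) :=
  epsilon (inhabits set0) (fun C => good_code C /\ net_iso B (K w0 C)).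
have FS B : sym_net B -> good_code (F B) /\ net_iso B (K w0 (F B)).
  by move=> HB; exact: (epsilon_spec _ _ (Ynet hmu hq w0 HB)).
exists F; split; first by move=> B /FS [].
split.
  move=> B B' HB HB'.
  have [g1 i1] := FS B HB; have [g2 i2] := FS B' HB'.
  split => H.
    apply: (Xfrom hmu hq g1 g2).
    apply: net_iso_trans (net_iso_sym i1) _.
    exact: net_iso_trans H i2.
  apply: (net_iso_trans i1); apply: (net_iso_trans (Xto w0 g1 g2 H)).
  exact: net_iso_sym i2.
move=> C gC.
exists (K w0 C); split; first exact: K_net.
have [g1 i1] := FS _ (K_net hmu hq w0 gC).
apply: (Xfrom hmu hq g1 gC).
exact: net_iso_sym i1.
Qed.
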